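(* Let $G$ be a finite graph and $\kappa$ a positive integer, and for each vertex $u$ let $\mathbb{F}(u)$ be a set of partial colorings of $G$ in each of which $u$ is colored. If every set $\mathbb{F}(u)$ is closed upward, then the set of allowed colorings is closed downward. Consequently, in that case, for any vertex $v$ and any partial coloring $\varphi\in\mathbb{F}(v)$ such that uncoloring $v$ in $\varphi$ yields an allowed coloring, uncoloring any set $S$ of vertices with $v\in S$ yields an allowed coloring.
   Context: A partial coloring of $G$ is a map $\varphi: V(G)\to\{\bullet,1,\dots,\kappa\}$, where $\bullet$ means uncolored. A partial coloring $\varphi$ is allowed if and only if either no vertex is colored, or there exists a colored vertex $v$ with $\varphi\notin\mathbb{F}(v)$ such that the coloring obtained from $\varphi$ by uncoloring $v$ is allowed (recursive definition). A set $X$ of partial colorings is closed upward (resp. closed downward) if, for any partial coloring in $X$, coloring any uncolored vertex with any color (resp. uncoloring any colored vertex) yields a partial coloring in $X$. *)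

(* Defs.v *)
From mathcomp Require Import all_boot.
Set Implicit Arguments. Unset Strict Implicit. Unset Printing Implicit Defensive.

(* A partial coloring of a graph on vertex type V with colors 1..k:
   None = uncolored (the bullet), Some c = colored with color c (c : 'I_k). *)
Definition pcoloring (V : finType) (k : nat) := {ffun V -> option 'I_k}.

Section Defs.
Variables (V : finType) (k : nat).
Implicit Types (phi : pcoloring V k) (X : {set pcoloring V k}).

Definition uncolor phi (v : V) : pcoloring V k :=
  [ffun x => if x == v then None else phi x].

Definition uncolor_set phi (S : {set V}) : pcoloring V k :=
  [ffun x => if x \in S then None else phi x].

Definition recolor phi (u : V) (c : 'I_k) : pcoloring V k :=
  [ffun x => if x == u then Some c else phi x].

Definition empty_coloring : pcoloring V k := [ffun _ => None].

Inductive allowed (F : V -> {set pcoloring V k}) : pcoloring V k -> Prop :=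
| allowed_empty : allowed F empty_coloring
| allowed_step phi v :
    phi v != None -> phi \notin F v -> allowed F (uncolor phi v) ->
    allowed F phi.

Definition closed_upward X : Prop :=
  forall phi u (c : 'I_k), phi \in X -> phi u = None -> recolor phi u c \in X.

Definition closed_downward (P : pcoloring V k -> Prop) : Prop :=
  forall phi u, P phi -> phi u != None -> P (uncolor phi u).

End Defs.

(* Main.v *)
Require Import Defs.
From mathcomp Require Import all_boot.

Lemma down_aux (V : finType) (k : nat) (F : V -> {set pcoloring V k})
    (hup : forall u, closed_upward (F u)) :
  closed_downward (allowed F).
Proof.
move=> phi u H; elim: H u => {phi} [|phi v Hv HF Ha IH] u Hu.
  by move: Hu; rewrite /empty_coloring ffunE.
have [->|nuv] := eqVneq u v; first exact: Ha.
apply: (@allowed_step _ _ _ _ v).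
- by rewrite ffunE (eq_sym v) (negbTE nuv).
- apply/negP => Hin.
  case E: (phi u) Hu => [c|] // _.
  have := hup v _ u c Hin.
  have -> : recolor (uncolor phi u) u c = phi.
    by apply/ffunP => x; rewrite !ffunE; case: eqP => // ->.
  have -> : uncolor phi u u = None by rewrite ffunE eqxx.
  by move=> /(_ erefl); rewrite (negbTE HF).
- have -> : uncolor (uncolor phi u) v = uncolor (uncolor phi v) u.
    by apply/ffunP => x; rewrite !ffunE; case: eqP; case: eqP.
  apply: IH; rewrite ffunE.
  by rewrite (negbTE nuv).
Qed.

Theorem lemma5 (V : finType) (adj : rel V) (k : nat) (hk : 0 < k)
    (F : V -> {set pcoloring V k})
    (hF : forall u phi, phi \in F u -> phi u != None)
    (hup : forall u, closed_upward (F u)) :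
  closed_downward (allowed F) /\
  (forall (v : V) (phi : pcoloring V k), phi \in F v ->
     allowed F (uncolor phi v) ->
     forall S : {set V}, v \in S -> allowed F (uncolor_set phi S)).
Proof.
have D := @down_aux V k F hup.
split=> // v phi _ Ha S vS.
have seqP : forall (s : seq V) psi, allowed F psi ->
    allowed F [ffun x => if x \in s then None else psi x].
  move=> s psi Hp; elim: s => [|a s IH].
    by have -> : [ffun x => if x \in [::] then None else psi x] = psi
      by apply/ffunP => x; rewrite ffunE.
  set g := [ffun x => _] in IH.
  case E: (g a) => [c|].
    have -> : [ffun x => if x \in a :: s then None else psi x] = uncolor g a.
      by apply/ffunP => x; rewrite !ffunE in_cons; case: eqP => [->|].
    by apply: D => //; rewrite E.
  have -> : [ffun x => if x \in a :: s then None else psi x] = g.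
    apply/ffunP => x; rewrite !ffunE in_cons; case: eqP => [->|] //=.
    by move: E; rewrite ffunE.
  exact: IH.
have := seqP (enum S) _ Ha.
have -> : [ffun x => if x \in enum S then None else uncolor phi v x]
   = uncolor_set phi S.
  apply/ffunP => x; rewrite !ffunE mem_enum.
  by case: ifP => // xS; case: eqP => // e; move: xS; rewrite e vS.
done.
Qed.
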